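(* Let $F$ be a once-punctured torus equipped with a point of the decorated super Teichmüller space $S\tilde T(F)$ with values in the Grassmann algebra $\mathbb{R}_{S[N]}$, with super semi-perimeter $h$. Fix an ideal arc $\mathbf a$ with $\lambda$-length $a$. Let $\{\mathbf b_i\}_{i\in\mathbb Z}$ be the sequence of ideal arcs disjoint from $\mathbf a$, indexed so that $\{\mathbf a,\mathbf b_i,\mathbf b_{i+1}\}$ is an ideal triangulation for every $i$, and let $\mathbf c_i$ be the arc obtained from $\mathbf a$ by flipping it in the triangulation $\{\mathbf a,\mathbf b_i,\mathbf b_{i+1}\}$. Let $b_i,c_i$ be their $\lambda$-lengths. Then, for each $k$, \[ \|s_{2k}(b_i)\|=O(|i|^kR^{|i|})\quad\text{and}\quad \|s_{2k}(c_i)\|=O(|i|^{2k}R^{2|i|})\qquad(|i|\to\infty), \] where $R=\epsilon(r)$ is the body of $r=\tfrac12\big(ah-W_a+\sqrt{(ah-W_a)^2-4}\big)$.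
   Context: $\mathbb{R}_{S[N]}$ is the real Grassmann algebra generated by anticommuting $\beta_{[1]},\dots,\beta_{[N]}$; each $x$ is $\sum_\lambda x_\lambda\beta_{[\lambda]}$, the body $\epsilon(x)$ is the coefficient of $1$, $\|x\|=\sum_\lambda|x_\lambda|$, and $s_{2k}(x)$ is the sum of terms of degree $|\lambda|=2k$ (with $s_0(x)=\epsilon(x)\cdot1$). $S\tilde T(F)$ is the decorated $\mathrm{OSp}(1|2)$ super Teichmüller space (Penner–Zeitlin): a point assigns to each ideal triangulation of $F$ even $\lambda$-lengths with positive body to its three arcs (depending only on the arc), odd $\mu$-invariants to its two triangles, and a spin structure orienting each arc. For an arc $e$, $W_e=\theta_1\theta_2$ with $\theta_1,\theta_2$ the $\mu$-invariants of the triangles adjacent to $e$ counter-clockwise and clockwise of $e$ relative to its spin orientation. Flipping $c$ in a triangulation $\{a,b,c\}$ produces $d$ with $cd=a^2+b^2+abW_c$. The super semi-perimeter is $h=\frac{a}{bc}+\frac{b}{ac}+\frac{c}{ab}+\frac{W_a}{a}+\frac{W_b}{b}+\frac{W_c}{c}$ for any triangulation $\{a,b,c\}$. *)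

(* Defs.v *)
From HB Require Import structures.
From mathcomp Require Import all_boot all_order all_algebra.
From mathcomp Require Import reals.
Set Implicit Arguments. Unset Strict Implicit. Unset Printing Implicit Defensive.
Import Order.TTheory GRing.Theory Num.Theory.
Local Open Scope ring_scope.

(* The real Grassmann algebra R_{S[N]}: x = sum_lambda x_lambda beta_[lambda],
   lambda ranging over subsets of {0..N-1}; beta_[lambda] is the ordered
   product of the generators with indices in lambda (increasing order). *)
Section Grassmann.
Variables (R : realType) (N : nat).

Definition grass := {ffun {set 'I_N} -> R}.

Definition gcst (c : R) : grass := [ffun l : {set 'I_N} => if l == set0 then c else 0].
Definition gzero : grass := gcst 0.
Definition gone : grass := gcst 1.
Definition gadd (x y : grass) : grass := [ffun l : {set 'I_N} => x l + y l].
Definition gopp (x : grass) : grass := [ffun l : {set 'I_N} => - x l].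
Definition gsub (x y : grass) : grass := gadd x (gopp y).
Definition gscale (c : R) (x : grass) : grass := [ffun l : {set 'I_N} => c * x l].

(* number of inversions needed to reorder beta_[m] beta_[n] into beta_[m :|: n] *)
Definition ninv (m n : {set 'I_N}) : nat :=
  #|[set p : 'I_N * 'I_N | [&& p.1 \in m, p.2 \in n & (p.2 < p.1)%N]]|.

(* product: beta_[m] beta_[n] = (-1)^(ninv m n) beta_[m :|: n] for disjoint m n,
   and 0 otherwise *)
Definition gmul (x y : grass) : grass :=
  [ffun l : {set 'I_N} => \sum_(m : {set 'I_N} | m \subset l)
               (-1) ^+ ninv m (l :\: m) * x m * y (l :\: m)].

Definition gpow (x : grass) (n : nat) : grass := iter n (gmul x) gone.

Definition body (x : grass) : R := x set0.
Definition grnorm (x : grass) : R := \sum_(l : {set 'I_N}) `|x l|.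
Definition spart (k : nat) (x : grass) : grass :=
  [ffun l : {set 'I_N} => if #|l| == k.*2 then x l else 0].

Definition is_even (x : grass) : Prop := forall l : {set 'I_N}, odd #|l| -> x l = 0.
Definition is_odd (x : grass) : Prop := forall l : {set 'I_N}, ~~ odd #|l| -> x l = 0.

Definition gnil (x : grass) : grass := gsub x (gcst (body x)).
Definition gsum (n : nat) (f : nat -> grass) : grass := \big[gadd/gzero]_(k < n) f k.

Definition ginv (x : grass) : grass :=
  gscale (body x)^-1
    (gsum N.+1 (fun k => gpow (gscale (- (body x)^-1) (gnil x)) k)).
Definition gdiv (x y : grass) : grass := gmul x (ginv y).

Definition halfbinom (k : nat) : R :=
  (\prod_(j < k) (2^-1 - j%:R)) / (k`!)%:R.

Definition gsqrt (x : grass) : grass :=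
  gscale (Num.sqrt (body x))
    (gsum N.+1 (fun k => gscale (halfbinom k) (gpow (gscale (body x)^-1 (gnil x)) k))).

End Grassmann.

(* Once-punctured torus: ideal arcs <-> primitive vectors (p,q) in Z^2 up to
   sign (slopes p/q in Q u {oo}); geometric intersection number of two arcs is
   |det|; two distinct arcs are disjoint iff |det| = 1, and three pairwise
   disjoint distinct arcs form an ideal triangulation. *)
Definition vec := (int * int)%type.
Definition vneg (v : vec) : vec := (- v.1, - v.2).
Definition det (u v : vec) : int := u.1 * v.2 - u.2 * v.1.
Definition prim (v : vec) : bool := gcdz v.1 v.2 == 1.
Definition same_arc (u v : vec) : bool := (u == v) || (u == vneg v).
Definition tri (u v w : vec) : bool :=
  [&& prim u, prim v, prim w, `|det u v| == 1, `|det v w| == 1 & `|det u w| == 1].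

Section SuperPoint.
Variables (R : realType) (N : nat).
Local Notation G := (grass R N).

(* Data of a point of S~T(F) with values in R_{S[N]}, as used in the statement:
   lam e       = lambda-length of the arc e;
   W x y e     = W_e computed in the triangulation {x, y, e}. *)
Definition hT (lam : vec -> G) (W : vec -> vec -> vec -> G) (u v w : vec) : G :=
  gadd (gadd (gadd (gadd (gadd
    (gdiv (lam u) (gmul (lam v) (lam w)))
    (gdiv (lam v) (gmul (lam u) (lam w))))
    (gdiv (lam w) (gmul (lam u) (lam v))))
    (gdiv (W v w u) (lam u)))
    (gdiv (W u w v) (lam v)))
    (gdiv (W u v w) (lam w)).

Definition super_point (lam : vec -> G) (W : vec -> vec -> vec -> G) : Prop :=
  [/\
      forall v, lam (vneg v) = lam v,
      forall v, prim v -> is_even (lam v) /\ 0 < body (lam v),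
      forall x y e, [/\ W x y e = W y x e, W (vneg x) y e = W x y e
                     & W x y (vneg e) = W x y e],
      (* W_e = theta1 theta2, theta_i the odd mu-invariants of the two
         triangles, ordered ccw/cw w.r.t. the spin orientation of e *)
      forall u v w, tri u v w ->
        exists th1 th2 : G, [/\ is_odd th1, is_odd th2,
          (W v w u = gmul th1 th2 \/ W v w u = gmul th2 th1),
          (W u w v = gmul th1 th2 \/ W u w v = gmul th2 th1) &
          (W u v w = gmul th1 th2 \/ W u v w = gmul th2 th1)]
    &
      forall u v w d, tri u v w -> tri u v d -> ~~ same_arc d w ->
        gmul (lam w) (lam d) =
        gadd (gadd (gmul (lam u) (lam u)) (gmul (lam v) (lam v)))
             (gmul (gmul (lam u) (lam v)) (W u v w))].

End SuperPoint.

(* Main.v *)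
Require Import Defs.
From HB Require Import structures.
From mathcomp Require Import all_boot all_order all_algebra.
From mathcomp Require Import reals.
From mathcomp Require Import ring lra zify.
Set Implicit Arguments. Unset Strict Implicit. Unset Printing Implicit Defensive.
Import Order.TTheory GRing.Theory Num.Theory.
Local Open Scope ring_scope.

Require Import Defs.
From HB Require Import structures.
From mathcomp Require Import all_boot all_order all_algebra.
From mathcomp Require Import reals.
From mathcomp Require Import ring lra.
Set Implicit Arguments. Unset Strict Implicit. Unset Printing Implicit Defensive.
Import Order.TTheory GRing.Theory Num.Theory.
Local Open Scope ring_scope.
Section Comb.
Variable N : nat.
Implicit Types m n p l : {set 'I_N}.

Lemma ninvUl m1 m2 n : [disjoint m1 & m2] ->
  ninv (m1 :|: m2) n = (ninv m1 n + ninv m2 n)%N.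
Proof.
move=> dis; rewrite /ninv -cardsUI.
have -> : [set p | [&& p.1 \in m1 :|: m2, p.2 \in n & (p.2 < p.1)%N]] =
  [set p | [&& p.1 \in m1, p.2 \in n & (p.2 < p.1)%N]] :|:
  [set p | [&& p.1 \in m2, p.2 \in n & (p.2 < p.1)%N]].
  by apply/setP => p; rewrite !inE andb_orl.
suff -> : [set p | [&& p.1 \in m1, p.2 \in n & (p.2 < p.1)%N]] :&:
  [set p | [&& p.1 \in m2, p.2 \in n & (p.2 < p.1)%N]] = set0 by rewrite cards0 addn0.
apply/setP => p; rewrite !inE.
case h1: (p.1 \in m1) => //=; case h2: (p.1 \in m2) => //=; last by rewrite andbF.
by move/disjointFr: dis => /(_ _ h1); rewrite h2.
Qed.

Lemma ninvUr m n1 n2 : [disjoint n1 & n2] ->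
  ninv m (n1 :|: n2) = (ninv m n1 + ninv m n2)%N.
Proof.
move=> dis; rewrite /ninv -cardsUI.
have -> : [set p | [&& p.1 \in m, p.2 \in n1 :|: n2 & (p.2 < p.1)%N]] =
  [set p | [&& p.1 \in m, p.2 \in n1 & (p.2 < p.1)%N]] :|:
  [set p | [&& p.1 \in m, p.2 \in n2 & (p.2 < p.1)%N]].
  by apply/setP => p; rewrite !inE andb_orl andb_orr.
suff -> : [set p | [&& p.1 \in m, p.2 \in n1 & (p.2 < p.1)%N]] :&:
  [set p | [&& p.1 \in m, p.2 \in n2 & (p.2 < p.1)%N]] = set0 by rewrite cards0 addn0.
apply/setP => p; rewrite !inE.
case h1: (p.2 \in n1) => //=; case h2: (p.2 \in n2) => //=; rewrite ?andbF //.
by move/disjointFr: dis => /(_ _ h1); rewrite h2.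
Qed.

Lemma ninv0l n : ninv set0 n = 0%N.
Proof. by rewrite /ninv; apply/eqP; rewrite cards_eq0; apply/eqP/setP => p; rewrite !inE. Qed.
Lemma ninv0r n : ninv n set0 = 0%N.
Proof. by rewrite /ninv; apply/eqP; rewrite cards_eq0; apply/eqP/setP => p; rewrite !inE andbF. Qed.

Lemma ninv_swap m n : [disjoint m & n] ->
  (ninv m n + ninv n m)%N = (#|m| * #|n|)%N.
Proof.
move=> dis; rewrite /ninv.
set B := [set p : 'I_N * 'I_N | [&& p.1 \in n, p.2 \in m & (p.2 < p.1)%N]].
set B' := [set p : 'I_N * 'I_N | [&& p.1 \in m, p.2 \in n & (p.1 < p.2)%N]].
have eB : #|B| = #|B'|.
  have -> : B' = [set (p.2, p.1) | p in B].
    apply/setP => q; rewrite !inE; apply/idP/imsetP.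
      move=> /and3P[h1 h2 h3]; exists (q.2, q.1); last by case: q {h1 h2 h3}.
      by rewrite inE /= h1 h2 h3.
    by move=> [p pB ->]; move: pB; rewrite inE => /and3P[h1 h2 h3] /=; rewrite h1 h2 h3.
  by rewrite card_imset // => p q [] h1 h2; case: p q h1 h2 => [??] [??] /= -> ->.
rewrite eB -cardsX -cardsUI.
have -> : [set p | [&& p.1 \in m, p.2 \in n & (p.2 < p.1)%N]] :&: B' = set0.
  apply/setP => p; rewrite !inE; case: (p.1 \in m); case: (p.2 \in n) => //=.
  by rewrite ltnNge; case: ltngtP.
rewrite cards0 addn0; apply: eq_card => p; rewrite !inE.
case h1: (p.1 \in m); case h2: (p.2 \in n) => //=.
have: p.1 != p.2 by apply/eqP => e; move/disjointFr: dis => /(_ _ h1); rewrite e h2.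
by rewrite -val_eqE /=; case: ltngtP.
Qed.

End Comb.

Section Alg.
Variables (R : realType) (N : nat).
Local Notation G := (grass R N).
Local Notation S := {set 'I_N}.
Local Notation sg m n := ((-1) ^+ ninv m n : R).
Implicit Types (x y z : G) (m n p l q : S) (c : R).

Lemma gmulE x y l : gmul x y l =
  \sum_(m : S | m \subset l) sg m (l :\: m) * x m * y (l :\: m).
Proof. by rewrite ffunE. Qed.
Lemma gaddE x y l : gadd x y l = x l + y l. Proof. by rewrite ffunE. Qed.
Lemma goppE x l : gopp x l = - x l. Proof. by rewrite ffunE. Qed.
Lemma gsubE x y l : gsub x y l = x l - y l. Proof. by rewrite /gsub gaddE goppE. Qed.
Lemma gscaleE c x l : gscale c x l = c * x l. Proof. by rewrite ffunE. Qed.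
Lemma gcstE c l : gcst N c l = if l == set0 then c else 0. Proof. by rewrite ffunE. Qed.
Lemma gzeroE l : gzero R N l = 0. Proof. by rewrite /gzero gcstE; case: ifP. Qed.
Lemma goneE l : gone R N l = if l == set0 then 1 else 0. Proof. by rewrite /gone gcstE. Qed.
Lemma gnilE x l : gnil x l = x l - (if l == set0 then body x else 0).
Proof. by rewrite /gnil gsubE gcstE. Qed.
Lemma gsumE (n : nat) (f : nat -> G) l : gsum n f l = \sum_(k < n) f k l.
Proof.
rewrite /gsum; apply: (big_rec2 (fun (a : G) (b : R) => a l = b)); first by rewrite gzeroE.
by move=> i a b _ <-; rewrite gaddE.
Qed.

Definition gE := (gaddE, gsubE, goppE, gscaleE, gcstE, gzeroE, goneE, gnilE, gsumE).

Lemma cardsm m l : m \subset l -> (#|m| + #|l :\: m|)%N = #|l|.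
Proof. by move=> ml; rewrite -(cardsID m l) (setIidPr ml). Qed.

Lemma setDDK m l : m \subset l -> l :\: (l :\: m) = m.
Proof. by move=> ml; rewrite setDDr setDv set0U (setIidPr ml). Qed.

Lemma setUDK m q : m \subset q -> m :|: (q :\: m) = q.
Proof.
move=> /subsetP mq; apply/setP => x; rewrite !inE.
by case xm: (x \in m) => //=; rewrite (mq _ xm).
Qed.

Lemma big_sup (F : S -> R) m l : m \subset l ->
  \sum_(q : S | (q \subset l) && (m \subset q)) F q =
  \sum_(p : S | p \subset l :\: m) F (m :|: p).
Proof.
move=> ml; rewrite (reindex_onto (fun p => m :|: p) (fun q => q :\: m)) /=.
  apply: eq_bigl => p; rewrite subUset ml subsetUl /= setDUl setDv set0U subsetD.
  apply/idP/idP => [/andP[/andP[-> _] /eqP/setDidPl]|/andP[-> dis]] //=.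
  by apply/eqP/setDidPl.
by move=> q /andP[_ mq]; rewrite setUDK.
Qed.

Lemma gmulDl x y z : gmul (gadd x y) z = gadd (gmul x z) (gmul y z).
Proof.
by apply/ffunP => l; rewrite !(gmulE, gaddE) -big_split /=; apply: eq_bigr => m _; rewrite gaddE; ring.
Qed.
Lemma gmulDr x y z : gmul x (gadd y z) = gadd (gmul x y) (gmul x z).
Proof.
by apply/ffunP => l; rewrite !(gmulE, gaddE) -big_split /=; apply: eq_bigr => m _; rewrite gaddE; ring.
Qed.
Lemma gmulBl x y z : gmul (gsub x y) z = gsub (gmul x z) (gmul y z).
Proof.
apply/ffunP => l; rewrite !(gmulE, gsubE) -sumrB /=; apply: eq_bigr => m _; rewrite gsubE; ring.
Qed.
Lemma gmulBr x y z : gmul x (gsub y z) = gsub (gmul x y) (gmul x z).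
Proof.
apply/ffunP => l; rewrite !(gmulE, gsubE) -sumrB /=; apply: eq_bigr => m _; rewrite gsubE; ring.
Qed.
Lemma gmulZl c x y : gmul (gscale c x) y = gscale c (gmul x y).
Proof.
apply/ffunP => l; rewrite !(gmulE, gscaleE) mulr_sumr; apply: eq_bigr => m _; rewrite gscaleE; ring.
Qed.
Lemma gmulZr c x y : gmul x (gscale c y) = gscale c (gmul x y).
Proof.
apply/ffunP => l; rewrite !(gmulE, gscaleE) mulr_sumr; apply: eq_bigr => m _; rewrite gscaleE; ring.
Qed.

Lemma gmulcl c x : gmul (gcst N c) x = gscale c x.
Proof.
apply/ffunP => l; rewrite gmulE gscaleE (bigD1 set0) ?sub0set //= big1 ?addr0.
  by rewrite gcstE eqxx setD0 ninv0l expr0 mul1r.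
by move=> m /andP[_ /negbTE hm]; rewrite gcstE hm mulr0 mul0r.
Qed.
Lemma gmulcr c x : gmul x (gcst N c) = gscale c x.
Proof.
apply/ffunP => l; rewrite gmulE gscaleE (bigD1 l) ?subxx //= big1 ?addr0.
  by rewrite gcstE setDv eqxx ninv0r expr0 mul1r mulrC.
move=> m /andP[ml ne]; rewrite gcstE.
suff -> : (l :\: m == set0) = false by rewrite mulr0.
by apply/negbTE; rewrite setD_eq0; apply: contra ne => lm; rewrite eqEsubset ml lm.
Qed.
Lemma gmul1l x : gmul (gone R N) x = x.
Proof. by rewrite gmulcl; apply/ffunP => l; rewrite gscaleE mul1r. Qed.
Lemma gmul1r x : gmul x (gone R N) = x.
Proof. by rewrite gmulcr; apply/ffunP => l; rewrite gscaleE mul1r. Qed.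

Lemma body_mul x y : body (gmul x y) = body x * body y.
Proof.
rewrite /body gmulE (bigD1 set0) ?sub0set //= big1 ?addr0.
  by rewrite setD0 ninv0l expr0 mul1r.
by move=> m /andP[]; rewrite subset0 => ->.
Qed.

Lemma sgn_assoc m p (r : S) : [disjoint m & p] -> [disjoint p & r] ->
  sg m (p :|: r) * sg p r = sg (m :|: p) r * sg m p.
Proof.
move=> d1 d2; rewrite ninvUr // ninvUl // -!exprD; congr (_ ^+ _).
by lia.
Qed.

Lemma gmulA x y z : gmul x (gmul y z) = gmul (gmul x y) z.
Proof.
apply/ffunP => l; rewrite !gmulE.
under [RHS]eq_bigr => q _ do rewrite gmulE mulr_sumr mulr_suml.
rewrite (exchange_big_dep (fun m => m \subset l)) /=; last first.
  by move=> q m ql mq; apply: subset_trans ql.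
apply: eq_bigr => m ml; rewrite gmulE mulr_sumr (big_sup _ ml).
apply: eq_bigr => p pl; set r := (l :\: m) :\: p.
have dmp : [disjoint m & p].
  by move: pl; rewrite subsetD disjoint_sym => /andP[].
have dpr : [disjoint p & r].
  by rewrite disjoint_sym disjoints_subset /r setDE subsetIr.
have e1 : l :\: m = p :|: r by rewrite /r setUDK.
have e2 : (m :|: p) :\: m = p.
  by rewrite setDUl setDv set0U; apply/setDidPl; rewrite disjoint_sym.
have e3 : l :\: (m :|: p) = r by rewrite /r setDDl.
rewrite e2 e3 {1}e1.
have sga := sgn_assoc dmp dpr.
transitivity ((sg m (p :|: r) * sg p r) * (x m * y p * z r)); first by ring.
by rewrite sga; ring.
Qed.

End Alg.


Section Alg2.
Variables (R : realType) (N : nat).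
Local Notation G := (grass R N).
Local Notation S := {set 'I_N}.
Local Notation sg m n := ((-1) ^+ ninv m n : R).
Implicit Types (x y z : G) (m n p l q : S) (c : R).

Lemma disjD m l : [disjoint m & l :\: m].
Proof. by rewrite disjoint_sym disjoints_subset setDE subsetIr. Qed.

Lemma sign2 (k : nat) : ((-1) ^+ (k + k) : R) = 1.
Proof. by rewrite -signr_odd oddD addbb expr0. Qed.

Lemma gmul_swapE x y l : gmul y x l =
  \sum_(m : S | m \subset l) (-1) ^+ (#|m| * #|l :\: m|) * sg m (l :\: m) * x m * y (l :\: m).
Proof.
rewrite gmulE (reindex_onto (fun m => l :\: m) (fun m => l :\: m)) /=; last first.
  by move=> m ml; rewrite setDDK.
rewrite (eq_bigl (fun m => m \subset l)); last first.
  move=> m; rewrite subsetDl /=; apply/eqP/idP => [<-|ml]; first exact: subsetDl.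
  exact: setDDK.
apply: eq_bigr => m ml; rewrite setDDK //.
have -> : sg (l :\: m) m = (-1) ^+ (#|m| * #|l :\: m|) * sg m (l :\: m).
  rewrite -(ninv_swap (disjD m l)) exprD mulrC mulrA -exprD sign2 mul1r //.
ring.
Qed.

Lemma even_comm x y : is_even x -> gmul x y = gmul y x.
Proof.
move=> hx; apply/ffunP => l; rewrite [in RHS]gmul_swapE gmulE; apply: eq_bigr => m ml.
case: (boolP (odd #|m|)) => om; first by rewrite (hx m om) !(mulr0, mul0r).
by rewrite -[(-1) ^+ (#|m| * _)]signr_odd oddM (negbTE om) /= expr0 mul1r.
Qed.

Lemma odd_anticomm x y : is_odd x -> is_odd y -> gmul y x = gopp (gmul x y).
Proof.
move=> hx hy; apply/ffunP => l; rewrite goppE [in LHS]gmul_swapE gmulE -sumrN; apply: eq_bigr => m ml.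
case: (boolP (odd #|m|)) => om; last by rewrite (hx m om) !(mulr0, mul0r) oppr0.
case: (boolP (odd #|l :\: m|)) => on; last by rewrite (hy _ on) !(mulr0, mul0r) oppr0.
rewrite -[(-1) ^+ (#|m| * _)]signr_odd oddM om on /= expr1; ring.
Qed.

Lemma oddm m l : m \subset l -> odd #|l| = odd #|m| (+) odd #|l :\: m|.
Proof. by move=> ml; rewrite -oddD cardsm. Qed.

Lemma even_mul x y : is_even x -> is_even y -> is_even (gmul x y).
Proof.
move=> hx hy l ol; rewrite gmulE big1 // => m ml.
move: ol; rewrite (oddm ml); case: (boolP (odd #|m|)) => om /=.
  by rewrite (hx _ om) !(mulr0, mul0r).
by move=> on; rewrite (hy _ on) mulr0.
Qed.

Lemma oddodd_mul x y : is_odd x -> is_odd y -> is_even (gmul x y).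
Proof.
move=> hx hy l ol; rewrite gmulE big1 // => m ml.
move: ol; rewrite (oddm ml); case: (boolP (odd #|m|)) => om /=.
  by move=> on; rewrite (hy _ on) mulr0.
by rewrite (hx _ om) !(mulr0, mul0r).
Qed.

Lemma even_add x y : is_even x -> is_even y -> is_even (gadd x y).
Proof. by move=> hx hy l ol; rewrite gaddE hx // hy // addr0. Qed.
Lemma even_sub x y : is_even x -> is_even y -> is_even (gsub x y).
Proof. by move=> hx hy l ol; rewrite gsubE hx // hy // subr0. Qed.
Lemma even_scale c x : is_even x -> is_even (gscale c x).
Proof. by move=> hx l ol; rewrite gscaleE hx // mulr0. Qed.
Lemma even_cst c : is_even (gcst N c).
Proof. by move=> l ol; rewrite gcstE; case: eqP => // e; move: ol; rewrite e cards0. Qed.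
Lemma even_one : is_even (gone R N). Proof. exact: even_cst. Qed.
Lemma even_gpow x k : is_even x -> is_even (gpow x k).
Proof. by move=> hx; elim: k => [|k ih] /=; [exact: even_one | exact: even_mul]. Qed.
Lemma even_gsum k (f : nat -> G) : (forall i, is_even (f i)) -> is_even (gsum k f).
Proof.
move=> hf l ol; rewrite gsumE big1 // => i _; exact: hf.
Qed.
Lemma even_gnil x : is_even x -> is_even (gnil x).
Proof. by move=> hx; apply: even_sub => //; exact: even_cst. Qed.
Lemma even_ginv x : is_even x -> is_even (ginv x).
Proof.
move=> hx; apply: even_scale; apply: even_gsum => i; apply: even_gpow.
by apply: even_scale; apply: even_gnil.
Qed.
Lemma even_gdiv x y : is_even x -> is_even y -> is_even (gdiv x y).
Proof. by move=> hx hy; apply: even_mul => //; apply: even_ginv. Qed.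

Lemma gmul_cancel0 y z : body y != 0 -> (forall l, gmul y z l = 0) -> forall l, z l = 0.
Proof.
move=> hy hz; suff H : forall k l, (#|l| < k)%N -> z l = 0 by move=> l; exact: (H #|l|.+1).
elim=> [//|k ih] l lk; have := hz l; rewrite gmulE (bigD1 set0) ?sub0set //=.
rewrite big1 ?addr0 ?setD0 ?ninv0l ?expr0 ?mul1r.
  by move/eqP; rewrite mulf_eq0 (negbTE hy) /= => /eqP.
move=> m /andP[ml m0]; rewrite ih ?mulr0 //.
have e := cardsm ml; have m0' : (0 < #|m|)%N by rewrite lt0n cards_eq0.
lia.
Qed.

Lemma gmul_cancel y z z' : body y != 0 -> gmul y z = gmul y z' -> z = z'.
Proof.
move=> hy e; apply/ffunP => l; apply/eqP; rewrite -subr_eq0; apply/eqP.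
have := gmul_cancel0 (z := gsub z z') hy; rewrite gmulBr e => H.
by rewrite -gsubE H // => l'; rewrite gsubE subrr.
Qed.

Lemma gpow_small x : body x = 0 -> forall k l, (#|l| < k)%N -> gpow x k l = 0.
Proof.
move=> hx; elim=> [//|k ih] l lk /=; rewrite gmulE big1 // => m ml.
case: (boolP (m == set0)) => [/eqP ->|m0]; first by rewrite -[x set0]/(body x) hx !(mulr0, mul0r).
rewrite ih ?mulr0 //.
have e := cardsm ml; have m0' : (0 < #|m|)%N by rewrite lt0n cards_eq0.
lia.
Qed.

Lemma card_leN l : (#|l| <= N)%N.
Proof. by rewrite -[X in (_ <= X)%N]card_ord max_card. Qed.

Lemma gmul_gsum x k (f : nat -> G) : gmul x (gsum k f) = gsum k (fun i => gmul x (f i)).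
Proof.
apply/ffunP => l; rewrite gmulE gsumE.
under eq_bigr => m _ do rewrite gsumE mulr_sumr.
rewrite exchange_big /=; apply: eq_bigr => i _; rewrite gmulE.
by apply: eq_bigr => m _.
Qed.

Lemma gmul_ginv y : body y != 0 -> gmul y (ginv y) = gone R N.
Proof.
move=> hy; set b := body y; set z := gscale (- b^-1) (gnil y).
have ey : y = gscale b (gsub (gone R N) z).
  apply/ffunP => l; rewrite /z !gE -/b; case: eqP => [->|_]; last by field.
  rewrite -[y set0]/(body y) -/b; field; exact: hy.
have bz : body z = 0 by rewrite /body /z gscaleE gnilE eqxx -[y set0]/(body y) subrr mulr0.
rewrite /ginv -/b -/z {1}ey gmulZl gmulZr gmulBl gmul1l gmul_gsum.
apply/ffunP => l; rewrite !gE.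
have := telescope_sumr (fun k => gpow z k l) (leq0n N.+1); rewrite big_mkord => tel.
have -> : \sum_(i < N.+1) gpow z i l - \sum_(i < N.+1) gmul z (gpow z i) l =
   - \sum_(i < N.+1) (gpow z i.+1 l - gpow z i l).
  by rewrite -sumrB -sumrN; apply: eq_bigr => i _; rewrite opprB.
rewrite tel gpow_small //; last by rewrite ltnS card_leN.
by rewrite sub0r opprK /= goneE mulrA mulfV // mul1r.
Qed.

Lemma ginv_mul y : body y != 0 -> gmul (ginv y) y = gone R N.
Proof.
move=> hy; apply: (gmul_cancel hy); rewrite gmulA gmul_ginv // gmul1l gmul1r //.
Qed.

Lemma body_one : body (gone R N) = 1. Proof. by rewrite /body goneE eqxx. Qed.
Lemma body_cst c : body (gcst N c) = c. Proof. by rewrite /body gcstE eqxx. Qed.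
Lemma body_add x y : body (gadd x y) = body x + body y. Proof. by rewrite /body gaddE. Qed.
Lemma body_sub x y : body (gsub x y) = body x - body y. Proof. by rewrite /body gsubE. Qed.
Lemma body_scale c x : body (gscale c x) = c * body x. Proof. by rewrite /body gscaleE. Qed.

Lemma body_ginv y : body y != 0 -> body (ginv y) = (body y)^-1.
Proof.
move=> hy; have := congr1 (@body R N) (gmul_ginv hy); rewrite body_mul body_one => h.
by apply: (mulfI hy); rewrite h mulfV.
Qed.

Lemma body_gdiv x y : body y != 0 -> body (gdiv x y) = body x / body y.
Proof. by move=> hy; rewrite /gdiv body_mul body_ginv. Qed.

Lemma body_gsqrt y : body (gsqrt y) = Num.sqrt (body y).
Proof.
rewrite /gsqrt body_scale /body gsumE big_ord_recl /= big1 ?addr0.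
  by rewrite gscaleE /halfbinom big_ord0 fact0 divr1 mul1r goneE eqxx mulr1.
move=> i _; rewrite gscaleE /=; rewrite -[gmul _ _ set0]/(body (gmul _ _)) body_mul.
by rewrite body_scale /body gnilE eqxx /body subrr mulr0 !mul0r mulr0.
Qed.

End Alg2.


Section Norm.
Variables (R : realType) (N : nat).
Local Notation G := (grass R N).
Local Notation S := {set 'I_N}.
Local Notation sg m n := ((-1) ^+ ninv m n : R).
Implicit Types (x y z : G) (m n p l q : S) (c t : R).

Definition wn t x : R := \sum_(l : S) `|x l| * t ^+ #|l|.
Definition deg2 x := forall l, (#|l| <= 1)%N -> x l = 0.

Lemma wn_ge0 t x : 0 <= t -> 0 <= wn t x.
Proof. by move=> t0; apply: sumr_ge0 => l _; rewrite mulr_ge0 // exprn_ge0. Qed.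

Lemma wn_add t x y : 0 <= t -> wn t (gadd x y) <= wn t x + wn t y.
Proof.
move=> t0; rewrite /wn -big_split /=; apply: ler_sum => l _.
by rewrite gaddE -mulrDl ler_wpM2r ?exprn_ge0 // ler_normD.
Qed.
Lemma wn_sub t x y : 0 <= t -> wn t (gsub x y) <= wn t x + wn t y.
Proof.
move=> t0; rewrite /wn -big_split /=; apply: ler_sum => l _.
by rewrite gsubE -mulrDl ler_wpM2r ?exprn_ge0 // ler_normB.
Qed.
Lemma wn_scale t c x : wn t (gscale c x) = `|c| * wn t x.
Proof. by rewrite /wn mulr_sumr; apply: eq_bigr => l _; rewrite gscaleE normrM mulrA. Qed.
Lemma wn_opp t x : wn t (gopp x) = wn t x.
Proof. by rewrite /wn; apply: eq_bigr => l _; rewrite goppE normrN. Qed.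
Lemma wn_cst t c : wn t (gcst N c) = `|c|.
Proof.
rewrite /wn (bigD1 set0) //= big1 ?addr0; first by rewrite gcstE eqxx cards0 expr0 mulr1.
by move=> l /negbTE hl; rewrite gcstE hl normr0 mul0r.
Qed.
Lemma wn_le1 t x : 0 <= t -> t <= 1 -> wn t x <= wn 1 x.
Proof.
move=> t0 t1; apply: ler_sum => l _; rewrite expr1n ler_wpM2l //.
exact: exprn_ile1.
Qed.
Lemma wn_deg2 t x : 0 <= t -> t <= 1 -> deg2 x -> wn t x <= t ^+ 2 * wn 1 x.
Proof.
move=> t0 t1 hx; rewrite /wn mulr_sumr; apply: ler_sum => l _.
case: (leqP #|l| 1) => hl; first by rewrite hx // normr0 !mul0r mulr0.
rewrite expr1n mulr1 mulrC ler_wpM2r //.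
exact: ler_wiXn2l.
Qed.
Lemma wn_spart t k x : 0 <= t -> grnorm (spart k x) * t ^+ k.*2 <= wn t x.
Proof.
move=> t0; rewrite /grnorm /wn mulr_suml; apply: ler_sum => l _; rewrite ffunE.
case: eqP => [<-|_]; first by [].
by rewrite normr0 mul0r mulr_ge0 ?exprn_ge0.
Qed.

Lemma big_sup' (F : S -> R) m :
  \sum_(q : S | m \subset q) F q = \sum_(p : S | p \subset ~: m) F (m :|: p).
Proof.
rewrite -setTD -big_sup ?subsetT //; apply: eq_bigl => q; by rewrite subsetT.
Qed.

Lemma wn_mul t x y : 0 <= t -> wn t (gmul x y) <= wn t x * wn t y.
Proof.
move=> t0.
apply: (@le_trans _ _ (\sum_(l : S) \sum_(m : S | m \subset l)
   (`|x m| * t ^+ #|m|) * (`|y (l :\: m)| * t ^+ #|l :\: m|))).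
  apply: ler_sum => l _; rewrite gmulE.
  apply: le_trans; first by apply: ler_wpM2r; [exact: exprn_ge0 | exact: ler_norm_sum].
  rewrite mulr_suml; apply: ler_sum => m ml.
  rewrite !normrM normrX normrN1 expr1n mul1r -(cardsm ml) exprD.
  by rewrite -!mulrA ler_wpM2l // (mulrCA (t ^+ _)) mulrA.
rewrite (exchange_big_dep predT) //=.
rewrite /wn mulr_suml; apply: ler_sum => m _; rewrite mulr_sumr.
rewrite (eq_bigl (fun q => m \subset q)) // big_sup'.
rewrite big_mkcond /=; apply: ler_sum => p _; case: ifP => hp.
  have -> : (m :|: p) :\: m = p.
    by rewrite setDUl setDv set0U; apply/setDidPl; rewrite disjoints_subset.
  by [].
by rewrite !mulr_ge0 ?exprn_ge0.
Qed.

Lemma deg2_oddmul x y : is_odd x -> is_odd y -> deg2 (gmul x y).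
Proof.
move=> hx hy l hl; rewrite gmulE big1 // => m ml; have e := cardsm ml.
case: (boolP (m == set0)) => [/eqP ->|m0]; first by rewrite hx ?cards0 // !(mulr0, mul0r).
have -> : l :\: m = set0.
  apply/eqP; rewrite -cards_eq0; move: m0; rewrite -cards_eq0; lia.
by rewrite hy ?cards0 // mulr0.
Qed.

Lemma deg2_even x : is_even x -> deg2 (gsub x (gcst N (body x))).
Proof.
move=> hx l hl; rewrite gsubE gcstE; case: eqP => [->|ne]; first by rewrite subrr.
rewrite hx ?subr0 //; have : #|l| != 0%N by rewrite cards_eq0; apply/eqP.
by move: hl; case: #|l| => [|[]].
Qed.

Lemma deg2_add x y : deg2 x -> deg2 y -> deg2 (gadd x y).
Proof. by move=> hx hy l hl; rewrite gaddE hx // hy // addr0. Qed.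
Lemma deg2_sub x y : deg2 x -> deg2 y -> deg2 (gsub x y).
Proof. by move=> hx hy l hl; rewrite gsubE hx // hy // subr0. Qed.
Lemma deg2_opp x : deg2 x -> deg2 (gopp x).
Proof. by move=> hx l hl; rewrite goppE hx // oppr0. Qed.

End Norm.


Section Growth.
Variables (R : realType) (N : nat).
Local Notation G := (grass R N).
Implicit Types (x y z : G) (c t : R).

Lemma growth t (B : nat -> G) rho c :
  0 <= t -> 1 < rho -> 0 <= c ->
  (forall n, wn t (gsub (gadd (B n.+2) (B n)) (gscale (rho + rho^-1) (B n.+1)))
       <= c * wn t (B n.+1) + c) ->
  forall n, wn t (B n) <=
    (rho + 2 * c * (rho / (rho - rho^-1) + 1)) ^+ n *
    (wn t (gsub (B 1%N) (gscale rho^-1 (B 0%N))) + wn t (gsub (B 1%N) (gscale rho (B 0%N))) + 1)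
     / (rho - rho^-1).
Proof.
move=> t0 r1 c0 hE.
set r' := rho^-1; set d := rho - r'.
have r0 : rho != 0 by apply/eqP => e; move: r1; rewrite e ltr10.
have rr' : rho * r' = 1 by rewrite /r' mulfV.
have r'0 : 0 < r' by rewrite /r' invr_gt0 (lt_trans ltr01).
have r'1 : r' < 1 by rewrite /r' invf_lt1 // (lt_trans ltr01).
have d0 : 0 < d by rewrite /d subr_gt0 (lt_trans r'1).
set P := fun n => gsub (B n.+1) (gscale r' (B n)).
set Q := fun n => gsub (B n.+1) (gscale rho (B n)).
set E := fun n => gsub (gadd (B n.+2) (B n)) (gscale (rho + r') (B n.+1)).
have eP : forall n, P n.+1 = gadd (gscale rho (P n)) (E n).
  move=> n; apply/ffunP => l; rewrite /P /E /r' !gE.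
  by field; rewrite ?r0.
have eQ : forall n, Q n.+1 = gadd (gscale r' (Q n)) (E n).
  move=> n; apply/ffunP => l; rewrite /Q /E /r' !gE.
  by field; rewrite ?r0.
have eB : forall n, B n = gscale d^-1 (gsub (P n) (Q n)).
  move=> n; apply/ffunP => l; rewrite /P /Q /d !gE; field.
  by rewrite subr_eq0; apply/eqP => e; move: d0; rewrite /d e subrr ltxx.
have eB1 : forall n, B n.+1 = gscale d^-1 (gsub (gscale rho (P n)) (gscale r' (Q n))).
  move=> n; apply/ffunP => l; rewrite /P /Q /d !gE.
  rewrite /r'; field.
  have h : 1 < rho * rho by nra.
  by rewrite r0 /= subr_eq0 (gt_eqF h).
set s := fun n => wn t (P n) + wn t (Q n).
have di : 0 <= d^-1 by rewrite invr_ge0 ltW.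
have s0 : forall n, 0 <= s n by move=> n; rewrite addr_ge0 ?wn_ge0.
have bB : forall n, wn t (B n) <= s n / d.
  move=> n; rewrite eB wn_scale (ger0_norm di) mulrC; apply: ler_wpM2r => //.
  exact: wn_sub.
have bB1 : forall n, wn t (B n.+1) <= rho * s n / d.
  move=> n; rewrite eB1 wn_scale (ger0_norm di) [d^-1 * _]mulrC.
  apply: ler_wpM2r => //.
  apply: le_trans; first exact: wn_sub.
  have rp : 0 <= rho by rewrite ltW // (lt_trans ltr01).
  rewrite !wn_scale (ger0_norm rp) (ger0_norm (ltW r'0)) /s mulrDr lerD2l.
  by apply: ler_wpM2r; rewrite ?wn_ge0 // ltW // (lt_trans r'1).
set K := rho + 2 * c * (rho / d + 1).
have step : forall n, s n.+1 + 1 <= K * (s n + 1).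
  move=> n.
  have hEn : wn t (E n) <= c * (rho * s n / d) + c.
    apply: le_trans; first exact: hE.
    by rewrite lerD2r ler_wpM2l.
  have hp : wn t (P n.+1) <= rho * wn t (P n) + wn t (E n).
    by rewrite eP; apply: le_trans; first exact: wn_add; rewrite wn_scale ger0_norm // ltW // (lt_trans ltr01).
  have hq : wn t (Q n.+1) <= rho * wn t (Q n) + wn t (E n).
    rewrite eQ; apply: le_trans; first exact: wn_add.
    rewrite wn_scale (ger0_norm (ltW r'0)) lerD2r; apply: ler_wpM2r; first exact: wn_ge0.
    exact: ltW (lt_trans r'1 r1).
  have hs : s n.+1 <= rho * s n + 2 * (c * (rho * s n / d) + c).
    rewrite /s; apply: le_trans; first exact: lerD hp hq.
    set e := wn t (E n); set p := wn t (P n); set q := wn t (Q n).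
    have : e <= c * (rho * (p + q) / d) + c by [].
    move=> he; rewrite mulrDr; lra.
  set u := rho / d.
  have u0 : 0 <= u by rewrite /u divr_ge0 // ltW // (lt_trans ltr01).
  move: hs; have -> : c * (rho * s n / d) = c * u * s n by rewrite /u mulrAC mulrA.
  rewrite /K -/u => hs.
  have cu : 0 <= c * u by apply: mulr_ge0.
  have cus : 0 <= c * u * s n by apply: mulr_ge0.
  have cs : 0 <= c * s n by apply: mulr_ge0.
  have -> : (rho + 2 * c * (u + 1)) * (s n + 1) =
     rho * s n + rho + 2 * (c * u * s n) + 2 * (c * u) + 2 * (c * s n) + 2 * c by ring.
  lra.
have rp : 0 <= rho by rewrite ltW // (lt_trans ltr01).
have K1 : 0 <= K.
  rewrite /K; apply: addr_ge0 => //; apply: mulr_ge0; first by apply: mulr_ge0.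
  by apply: addr_ge0 => //; apply: divr_ge0 => //; apply: ltW.
have ind : forall n, s n + 1 <= K ^+ n * (s 0%N + 1).
  elim=> [|n ih]; first by rewrite expr0 mul1r.
  apply: le_trans; first exact: step.
  by rewrite exprS -mulrA; apply: ler_wpM2l.
move=> n; apply: le_trans; first exact: bB.
rewrite -/d -/K; apply: ler_wpM2r => //.
apply: le_trans; last exact: ind.
by rewrite lerDl.
Qed.

End Growth.


Section Extract.
Variables (R : realType) (N : nat).
Local Notation G := (grass R N).

Lemma pow_bound (x : R) (n : nat) : 0 <= x -> n%:R * x <= 2^-1 -> (1 + x) ^+ n <= 2.
Proof.
move=> x0 hn.
have key : forall n : nat, (1 + x) ^+ n * (1 - n%:R * x) <= 1.
  elim=> [|j ih]; first by rewrite expr0 mul0r subr0 mul1r.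
  set a := (1 + x) ^+ j in ih *.
  have a0 : 0 <= a by rewrite exprn_ge0 // addr_ge0.
  have h : 0 <= a * (x * x * (j%:R + 1)) by rewrite mulr_ge0 // !mulr_ge0 // addr_ge0.
  have -> : (1 + x) ^+ j.+1 * (1 - j.+1%:R * x) = a * (1 - j%:R * x) - a * (x * x * (j%:R + 1)).
    by rewrite exprS -/a -addn1 natrD; ring.
  lra.
have := key n; set a := (1 + x) ^+ n => ka.
have a0 : 0 <= a by rewrite exprn_ge0 // addr_ge0.
have : a * 2^-1 <= a * (1 - n%:R * x) by apply: ler_wpM2l => //; lra.
lra.
Qed.

Lemma extract (f : nat -> G) (k : nat) (rho K0 C0 : R) (m e : nat) :
  1 <= rho -> 0 <= K0 -> 0 <= C0 ->
  (forall (n : nat) (t : R), (0 < n)%N -> 0 < t -> t <= 1 ->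
      wn t (f n) <= C0 * (rho + K0 * t ^+ 2) ^+ (m * n + e)) ->
  exists C : R, 0 <= C /\ forall n : nat, (0 < n)%N ->
      grnorm (spart k (f n)) <= C * n%:R ^+ k * rho ^+ (m * n).
Proof.
move=> r1 K00 C00 hf.
set L : R := 2 * (m + e)%:R * K0 + 1.
have L1 : 1 <= L by rewrite /L lerDr !mulr_ge0.
exists (L ^+ k * 2 * C0 * rho ^+ e); split.
  by rewrite !mulr_ge0 ?exprn_ge0 // ?(le_trans ler01 L1) // (le_trans ler01 r1).
move=> n n0.
have n1 : 1 <= n%:R :> R by rewrite ler1n.
set u := (n%:R * L)^-1.
have nL1 : 1 <= n%:R * L by nra.
have nL0 : 0 < n%:R * L by apply: lt_le_trans nL1.
have u0 : 0 < u by rewrite invr_gt0.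
have u1 : u <= 1 by rewrite invf_le1.
set t := Num.sqrt u.
have t2 : t ^+ 2 = u by rewrite sqr_sqrtr // ltW.
have t0 : 0 < t by rewrite sqrtr_gt0.
have t1 : t <= 1 by rewrite -(sqrtr1 R); apply: ler_wsqrtr.
have hw := hf n t n0 t0 t1; rewrite t2 in hw.
have hs := wn_spart k (f n) (ltW t0).
have ek : t ^+ k.*2 = u ^+ k by rewrite -muln2 mulnC exprM t2.
rewrite ek in hs.
have r0 : 0 < rho by apply: lt_le_trans r1.
have ef : rho + K0 * u = rho * (1 + K0 * u / rho) by field; apply: lt0r_neq0.
have pb : (1 + K0 * u / rho) ^+ (m * n + e) <= 2.
  apply: pow_bound; first by rewrite divr_ge0 ?mulr_ge0 // ltW.
  have hx : K0 * u / rho <= K0 * u.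
    rewrite ler_pdivrMr // ler_peMr // mulr_ge0 // ltW //.
  have hmn : (m * n + e)%:R <= (m + e)%:R * n%:R :> R.
    by rewrite -natrM ler_nat mulnDl leq_add2l leq_pmulr.
  have hK : (m + e)%:R * n%:R * (K0 * u) <= 2^-1.
    have L0 : 0 < L by apply: lt_le_trans L1.
    have -> : (m + e)%:R * n%:R * (K0 * u) = (m + e)%:R * K0 / L.
      rewrite /u; field; apply/andP; split; apply: lt0r_neq0 => //.
      by apply: lt_le_trans n1.
    rewrite ler_pdivrMr // /L; lra.
  have h1 : (m * n + e)%:R * (K0 * u / rho) <= (m * n + e)%:R * (K0 * u).
    by apply: ler_wpM2l.
  have h2 : (m * n + e)%:R * (K0 * u) <= (m + e)%:R * n%:R * (K0 * u).
    by apply: ler_wpM2r => //; rewrite mulr_ge0 // ltW.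
  lra.
move: hw; rewrite ef exprMn => hw.
have hX : grnorm (spart k (f n)) * u ^+ k <= C0 * rho ^+ (m * n + e) * 2.
  apply: (le_trans hs); apply: (le_trans hw); rewrite -[C0 * _ * 2]mulrA; apply: ler_wpM2l => //.
  by apply: ler_wpM2l => //; rewrite exprn_ge0 // ltW.
have uk : u ^+ k * (n%:R * L) ^+ k = 1 by rewrite -exprMn /u mulVf ?expr1n // lt0r_neq0.
have -> : grnorm (spart k (f n)) = grnorm (spart k (f n)) * u ^+ k * (n%:R * L) ^+ k.
  by rewrite -mulrA uk mulr1.
have -> : L ^+ k * 2 * C0 * rho ^+ e * n%:R ^+ k * rho ^+ (m * n) =
    C0 * rho ^+ (m * n + e) * 2 * (n%:R * L) ^+ k by rewrite exprD exprMn; ring.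
by apply: ler_wpM2r => //; rewrite exprn_ge0 // ltW.
Qed.

End Extract.


Section RecAlg.
Variables (R : realType) (N : nat).
Local Notation G := (grass R N).
Implicit Types (x y z : G).

Lemma gdivK x y : body y != 0 -> gmul (gdiv x y) y = x.
Proof. by move=> hy; rewrite /gdiv -gmulA ginv_mul // gmul1r. Qed.

Lemma even_opp x : is_even x -> is_even (gopp x).
Proof. by move=> hx l ol; rewrite goppE hx // oppr0. Qed.

Lemma rec_alg (A B C D Wa Wb Wc h : G) :
  is_even A -> is_even B -> is_even C ->
  body A != 0 -> body B != 0 -> body C != 0 ->
  h = gadd (gadd (gadd (gadd (gadd
    (gdiv A (gmul B C)) (gdiv B (gmul A C))) (gdiv C (gmul A B)))
    (gdiv Wa A)) (gdiv Wb B)) (gdiv Wc C) ->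
  gmul C D = gadd (gadd (gmul A A) (gmul B B)) (gmul (gmul A B) Wc) ->
  gadd C D = gsub (gmul (gsub (gmul A h) Wa) B) (gmul A Wb).
Proof.
move=> eA eB eC nA nB nC hdef flip.
have nAB : body (gmul A B) != 0 by rewrite body_mul mulf_neq0.
have nAC : body (gmul A C) != 0 by rewrite body_mul mulf_neq0.
have nBC : body (gmul B C) != 0 by rewrite body_mul mulf_neq0.
have eAB : is_even (gmul A B) by apply: even_mul.
set P := gmul A (gmul B C).
have e1 : P = gmul (gmul B C) A by rewrite /P (even_comm _ eA).
have e2 : P = gmul (gmul A C) B by rewrite /P (even_comm _ eB) gmulA.
have e3 : P = gmul (gmul A B) C by rewrite /P gmulA.
have e5 : P = gmul B (gmul A C) by rewrite e3 (even_comm _ eA) -gmulA.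
have e6 : P = gmul C (gmul A B) by rewrite e3 (even_comm _ eAB).
have hP : gmul h P = gadd (gadd (gadd (gadd (gadd (gmul A A) (gmul B B)) (gmul C C))
      (gmul Wa (gmul B C))) (gmul Wb (gmul A C))) (gmul Wc (gmul A B)).
  have k1 : gmul (gdiv A (gmul B C)) P = gmul A A by rewrite e1 gmulA gdivK.
  have k2 : gmul (gdiv B (gmul A C)) P = gmul B B by rewrite e2 gmulA gdivK.
  have k3 : gmul (gdiv C (gmul A B)) P = gmul C C by rewrite e3 gmulA gdivK.
  have k4 : gmul (gdiv Wa A) P = gmul Wa (gmul B C) by rewrite /P gmulA gdivK.
  have k5 : gmul (gdiv Wb B) P = gmul Wb (gmul A C) by rewrite e5 gmulA gdivK.
  have k6 : gmul (gdiv Wc C) P = gmul Wc (gmul A B) by rewrite e6 gmulA gdivK.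
  by rewrite hdef !gmulDl k1 k2 k3 k4 k5 k6.
have c1 : gmul C (gmul Wa B) = gmul Wa (gmul B C).
  by rewrite gmulA (even_comm _ eC) -gmulA (even_comm _ eC).
have c2 : gmul C (gmul Wb A) = gmul Wb (gmul A C).
  by rewrite gmulA (even_comm _ eC) -gmulA (even_comm _ eC).
have c3 : gmul (gmul A B) Wc = gmul Wc (gmul A B) by rewrite (even_comm _ eAB).
have c4 : gmul C (gmul h (gmul A B)) = gmul h P.
  by rewrite (even_comm _ eC) -gmulA -e3.
have key : gmul h (gmul A B) = gadd (gadd (gadd D C) (gmul Wa B)) (gmul Wb A).
  apply: (gmul_cancel nC); rewrite c4 hP !gmulDr c1 c2 flip c3.
  apply/ffunP => l; rewrite !gaddE; ring.
have c5 : gmul (gmul A h) B = gmul h (gmul A B) by rewrite (even_comm _ eA) -gmulA.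
rewrite gmulBl c5 key (even_comm Wb eA).
apply/ffunP => l; rewrite !(gaddE, gsubE, goppE); ring.
Qed.

End RecAlg.


Lemma detC (u v : vec) : det v u = - det u v.
Proof. by rewrite /det; ring. Qed.

Lemma tri_132 u v w : tri u v w -> tri u w v.
Proof.
case/and3P => pu pv /and4P [pw uv vw uw]; apply/and3P; split => //; apply/and4P; split => //.
by rewrite detC normrN.
Qed.
Lemma tri_213 u v w : tri u v w -> tri v u w.
Proof.
case/and3P => pu pv /and4P [pw uv vw uw]; apply/and3P; split => //; apply/and4P; split => //.
by rewrite detC normrN.
Qed.
Lemma tri_231 u v w : tri u v w -> tri v w u.
Proof. by move=> t; apply: tri_132; apply: tri_213. Qed.

Lemma nat_eq2 (n : nat) : (2 * n + 2 = n.+1 + n.+1)%N.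
Proof. lia. Qed.

Section Main.
Variables (R : realType) (N : nat) (lam : vec -> grass R N)
  (W : vec -> vec -> vec -> grass R N) (h : grass R N) (a : vec) (b c : int -> vec).
Local Notation G := (grass R N).
Hypothesis sp : super_point lam W.
Hypothesis hh : forall u v w, tri u v w -> hT lam W u v w = h.
Hypothesis hb : forall i, tri a (b i) (b (i + 1)).
Hypothesis hinj : forall i j, same_arc (b i) (b j) -> i = j.
Hypothesis hc : forall i, tri (b i) (b (i + 1)) (c i) /\ ~~ same_arc (c i) a.

Local Notation A := (lam a).

Lemma lam_even v : prim v -> is_even (lam v).
Proof. by case: sp => _ hev _ _ _ pv; case: (hev v pv). Qed.
Lemma lam_body v : prim v -> 0 < body (lam v).
Proof. by case: sp => _ hev _ _ _ pv; case: (hev v pv). Qed.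
Lemma lam_nz v : prim v -> body (lam v) != 0.
Proof. by move=> pv; apply: lt0r_neq0; apply: lam_body. Qed.
Lemma flipE u v w d : tri u v w -> tri u v d -> ~~ same_arc d w ->
  gmul (lam w) (lam d) =
  gadd (gadd (gmul (lam u) (lam u)) (gmul (lam v) (lam v))) (gmul (gmul (lam u) (lam v)) (W u v w)).
Proof. by case: sp => _ _ _ _ hf; apply: hf. Qed.

Definition pmw (om X : G) := X = om \/ X = gopp om.

Lemma Wprops u v w : tri u v w -> exists om : G,
  [/\ is_even om, deg2 om, pmw om (W v w u), pmw om (W u w v) & pmw om (W u v w)].
Proof.
case: sp => _ _ _ htri _ T; case: (htri u v w T) => t1 [t2 [o1 o2 h1 h2 h3]].
exists (gmul t1 t2); split; first exact: oddodd_mul.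
- exact: deg2_oddmul.
- by case: h1 => ->; [left | right; apply: odd_anticomm].
- by case: h2 => ->; [left | right; apply: odd_anticomm].
- by case: h3 => ->; [left | right; apply: odd_anticomm].
Qed.

Lemma pmw_props om X : is_even om -> deg2 om -> pmw om X ->
  [/\ is_even X, deg2 X & forall t, wn t X = wn t om].
Proof.
move=> eo dd; case=> ->; split => //.
- exact: even_opp.
- exact: deg2_opp.
- by move=> t; rewrite wn_opp.
Qed.

Lemma prim_a : prim a. Proof. by case/and3P: (hb 0). Qed.
Lemma prim_b i : prim (b i). Proof. by case/and3P: (hb i). Qed.
Lemma hb' i : tri a (b (i - 1)) (b i).
Proof. by have := hb (i - 1); rewrite subrK. Qed.

Lemma Wcancel i : W a (b i) (b (i + 1)) = W a (b i) (b (i - 1)).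
Proof.
have t1 := hb i; have t2 := tri_132 (hb' i).
have ns1 : ~~ same_arc (b (i - 1)) (b (i + 1)) by apply/negP => /hinj; lia.
have ns2 : ~~ same_arc (b (i + 1)) (b (i - 1)) by apply/negP => /hinj; lia.
have f1 := flipE t1 t2 ns1; have f2 := flipE t2 t1 ns2.
rewrite (even_comm _ (lam_even (prim_b (i + 1)))) f2 in f1.
have nAB : body (gmul A (lam (b i))) != 0 by rewrite body_mul mulf_neq0 // lam_nz // ?prim_a ?prim_b.
apply: (gmul_cancel nAB); apply/ffunP => l.
by have := congr1 (fun g : G => g l) f1; rewrite !gaddE => /addrI.
Qed.

Definition F t i := wn t (W a (b i) (b (i + 1))).

Lemma Fstep t i : F t i = F t (i - 1).
Proof.
rewrite /F Wcancel subrK; case: (Wprops (hb' i)) => om [eo dd _ h2 h3].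
by case: (pmw_props eo dd h2) => _ _ ->; case: (pmw_props eo dd h3) => _ _ ->.
Qed.

Lemma Fconst t i : F t i = F t 0.
Proof.
have pos : forall n : nat, F t n = F t 0.
  elim=> // n ih; rewrite Fstep; have -> : (n.+1%:Z - 1) = n by lia.
  exact: ih.
have neg : forall n : nat, F t (- n%:Z) = F t 0.
  elim=> [|n ih]; first by rewrite oppr0.
  by rewrite -ih (Fstep t (- n%:Z)); congr (F t _); lia.
by case: i => n; [exact: pos | rewrite NegzE; exact: neg].
Qed.

Lemma Wfacts i X : X = W (b i) (b (i + 1)) a \/ X = W a (b (i + 1)) (b i) \/ X = W a (b i) (b (i + 1)) ->
  [/\ is_even X, deg2 X & forall t, wn t X = F t 0].
Proof.
move=> hX; case: (Wprops (hb i)) => om [eo dd h1 h2 h3].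
have hF : forall t, F t 0 = wn t om.
  by move=> t; rewrite -(Fconst t i) /F; case: (pmw_props eo dd h3) => _ _ ->.
have: pmw om X by case: hX => [->|[->|->]].
case/(pmw_props eo dd) => e1 d1 w1; split => // t; by rewrite w1 hF.
Qed.

Lemma T0 : tri a (b 0) (b 1). Proof. by have := hb 0; rewrite add0r. Qed.
Lemma hdef : h = hT lam W a (b 0) (b 1). Proof. by rewrite (hh T0). Qed.

Lemma h_even : is_even h.
Proof.
have ea := lam_even prim_a; have e0 := lam_even (prim_b 0); have e1 := lam_even (prim_b 1).
have W1 : is_even (W (b 0) (b 1) a) by case: (Wfacts (i := 0) (or_introl erefl)); rewrite add0r.
have W2 : is_even (W a (b 1) (b 0)) by case: (Wfacts (i := 0) (or_intror (or_introl erefl))); rewrite add0r.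
have W3 : is_even (W a (b 0) (b 1)) by case: (Wfacts (i := 0) (or_intror (or_intror erefl))); rewrite add0r.
rewrite hdef /hT.
by repeat (apply: even_add || apply: even_gdiv || apply: even_mul); rewrite //.
Qed.

Lemma rec i : gadd (lam (b (i + 1))) (lam (b (i - 1))) =
  gsub (gmul (gsub (gmul A h) (W (b i) (b (i + 1)) a)) (lam (b i))) (gmul A (W a (b (i + 1)) (b i))).
Proof.
have ns1 : ~~ same_arc (b (i - 1)) (b (i + 1)) by apply/negP => /hinj; lia.
apply: rec_alg.
- exact: lam_even prim_a.
- exact: lam_even (prim_b _).
- exact: lam_even (prim_b _).
- exact: lam_nz prim_a.
- exact: lam_nz (prim_b _).
- exact: lam_nz (prim_b _).
- by rewrite -(hh (hb i)).
exact: flipE (hb i) (tri_132 (hb' i)) ns1.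
Qed.

Definition x0 := body (gmul A h).

Lemma body_deg2 (X : G) : deg2 X -> body X = 0.
Proof. by move=> dX; rewrite /body dX // cards0. Qed.

Lemma x0_gt2 : 2 < x0.
Proof.
have [_ d1 _] := Wfacts (i := 0) (or_introl erefl).
have [_ d2 _] := Wfacts (i := 0) (or_intror (or_introl erefl)).
have [_ d3 _] := Wfacts (i := 0) (or_intror (or_intror erefl)).
rewrite add0r in d1 d2 d3.
have pa := lam_body prim_a; have p0 := lam_body (prim_b 0); have p1 := lam_body (prim_b 1).
set al := body A in pa *; set b0 := body (lam (b 0)) in p0 *; set b1 := body (lam (b 1)) in p1 *.
have nz : forall v, prim v -> body (lam v) != 0 by move=> v pv; apply: lam_nz.
have nzm : forall u v, prim u -> prim v -> body (gmul (lam u) (lam v)) != 0.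
  by move=> u v pu pv; rewrite body_mul mulf_neq0 ?nz.
rewrite /x0 body_mul hdef /hT !body_add !body_gdiv ?nz ?nzm ?prim_a ?prim_b //.
rewrite !body_mul (body_deg2 d1) (body_deg2 d2) (body_deg2 d3) -/al -/b0 -/b1.
have -> : al * (al / (b0 * b1) + b0 / (al * b1) + b1 / (al * b0) + 0 / al + 0 / b0 + 0 / b1)
   = (al ^+ 2 + b0 ^+ 2 + b1 ^+ 2) / (b0 * b1).
  by field; rewrite !lt0r_neq0.
have h1 : 0 <= (b0 - b1) ^+ 2 := sqr_ge0 _.
have h2 : 0 < al ^+ 2 := exprn_gt0 _ pa.
rewrite ltr_pdivlMr ?mulr_gt0 //; nra.
Qed.

Definition sd := Num.sqrt (x0 * x0 - 4).
Definition rho := 2^-1 * (x0 + sd).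

Lemma sd_sq : sd ^+ 2 = x0 * x0 - 4.
Proof. rewrite /sd sqr_sqrtr //; have := x0_gt2; nra. Qed.
Lemma sd_ge0 : 0 <= sd. Proof. exact: sqrtr_ge0. Qed.

Lemma rho_gt1 : 1 < rho.
Proof. rewrite /rho; have := x0_gt2; have := sd_ge0; lra. Qed.

Lemma rho_sum : rho + rho^-1 = x0.
Proof.
have e : rho * (2^-1 * (x0 - sd)) = 1.
  rewrite /rho; have := sd_sq; rewrite expr2 => hs.
  have -> : 2^-1 * (x0 + sd) * (2^-1 * (x0 - sd)) = (x0 * x0 - sd * sd) / 4 by field.
  by rewrite hs; field.
have rn : rho != 0 by apply: lt0r_neq0; apply: lt_trans rho_gt1.
have -> : rho^-1 = 2^-1 * (x0 - sd) by apply: (mulfI rn); rewrite mulfV // e.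
by rewrite /rho; field.
Qed.

Definition c0 := wn 1 (gsub (gmul A h) (gcst N x0)) + F 1 0 + wn 1 A * F 1 0.

Lemma c0_ge0 : 0 <= c0.
Proof. by rewrite /c0 /F !addr_ge0 ?mulr_ge0 ?wn_ge0. Qed.

Lemma Ebound t i : 0 <= t -> t <= 1 ->
  wn t (gsub (gadd (lam (b (i + 1))) (lam (b (i - 1)))) (gscale x0 (lam (b i))))
    <= (c0 * t ^+ 2) * wn t (lam (b i)) + c0 * t ^+ 2.
Proof.
move=> t0 t1.
set Wa := W (b i) (b (i + 1)) a; set Wb := W a (b (i + 1)) (b i); set B := lam (b i).
set M := gsub (gsub (gmul A h) (gcst N x0)) Wa.
have eE : gsub (gadd (lam (b (i + 1))) (lam (b (i - 1)))) (gscale x0 B) =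
    gsub (gmul M B) (gmul A Wb).
  rewrite rec /M -/Wa -/Wb -/B !gmulBl gmulcl; apply/ffunP => l; rewrite !(gsubE, gscaleE); ring.
rewrite eE.
have [_ dWa wWa] := Wfacts (i := i) (X := Wa) (or_introl erefl).
have [_ dWb wWb] := Wfacts (i := i) (X := Wb) (or_intror (or_introl erefl)).
have dAh : deg2 (gsub (gmul A h) (gcst N x0)).
  by apply: deg2_even; apply: even_mul; [exact: lam_even prim_a | exact: h_even].
set c1 := wn 1 (gsub (gmul A h) (gcst N x0)).
set F1 := F 1 0; set wA1 := wn 1 A.
have c10 : 0 <= c1 by apply: wn_ge0.
have F10 : 0 <= F1 by apply: wn_ge0.
have wA10 : 0 <= wA1 by apply: wn_ge0.
have wB0 : 0 <= wn t B by apply: wn_ge0.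
have t20 : 0 <= t ^+ 2 by apply: exprn_ge0.
have hM : wn t M <= t ^+ 2 * (c1 + F1).
  apply: le_trans; first exact: wn_sub.
  rewrite mulrDr; apply: lerD; first exact: wn_deg2.
  by rewrite /F1 -(wWa 1); apply: wn_deg2.
have hA : wn t A <= wA1 by apply: wn_le1.
have hWb : wn t Wb <= t ^+ 2 * F1 by rewrite /F1 -(wWb 1); apply: wn_deg2.
have s1 : wn t (gmul M B) <= t ^+ 2 * (c1 + F1) * wn t B.
  apply: le_trans; first exact: wn_mul.
  by apply: ler_wpM2r.
have s2 : wn t (gmul A Wb) <= wA1 * (t ^+ 2 * F1).
  apply: le_trans; first exact: wn_mul.
  by apply: ler_pM => //; apply: wn_ge0.
apply: le_trans; first exact: wn_sub.
have q1 : 0 <= wA1 * F1 * (t ^+ 2 * wn t B) by rewrite !mulr_ge0.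
have q2 : 0 <= c1 * t ^+ 2 by rewrite mulr_ge0.
have q3 : 0 <= F1 * t ^+ 2 by rewrite mulr_ge0.
have -> : c0 * t ^+ 2 * wn t B + c0 * t ^+ 2 =
   (c1 + F1) * (t ^+ 2 * wn t B) + wA1 * F1 * (t ^+ 2 * wn t B) + c1 * t ^+ 2 + F1 * t ^+ 2 + wA1 * (t ^+ 2 * F1).
  by rewrite /c0 -/c1 -/F1 -/wA1; ring.
have e1 : t ^+ 2 * (c1 + F1) * wn t B = (c1 + F1) * (t ^+ 2 * wn t B) by ring.
rewrite e1 in s1.
lra.
Qed.

Definition dd := rho - rho^-1.
Lemma dd_gt0 : 0 < dd.
Proof.
have r1 := rho_gt1; have ri : rho^-1 < 1 by rewrite invf_lt1 // (lt_trans ltr01).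
by rewrite /dd subr_gt0 (lt_trans ri).
Qed.
Definition K0 := 2 * c0 * (rho / dd + 1).
Lemma K0_ge0 : 0 <= K0.
Proof.
have r1 := rho_gt1; have d0 := dd_gt0.
have r0 : 0 <= rho by rewrite ltW // (lt_trans ltr01).
have q : 0 <= rho / dd + 1 by rewrite addr_ge0 // divr_ge0 // ltW.
by rewrite /K0; apply: mulr_ge0 => //; apply: mulr_ge0 => //; apply: c0_ge0.
Qed.

Definition Pp := gsub (lam (b 1)) (gscale rho^-1 (lam (b 0))).
Definition Qp := gsub (lam (b 1)) (gscale rho (lam (b 0))).
Definition Pm := gsub (lam (b (-1))) (gscale rho^-1 (lam (b 0))).
Definition Qm := gsub (lam (b (-1))) (gscale rho (lam (b 0))).
Definition Cb := (wn 1 Pp + wn 1 Qp + wn 1 Pm + wn 1 Qm + 2) / dd.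
Lemma Cb_ge0 : 0 <= Cb.
Proof.
apply: divr_ge0; last exact: ltW dd_gt0.
have := wn_ge0 Pp ler01; have := wn_ge0 Qp ler01.
have := wn_ge0 Pm ler01; have := wn_ge0 Qm ler01; lra.
Qed.

Lemma gaddC' (x y : G) : gadd x y = gadd y x.
Proof. by apply/ffunP => l; rewrite !gaddE addrC. Qed.

Lemma bnd t i : 0 < t -> t <= 1 -> wn t (lam (b i)) <= Cb * (rho + K0 * t ^+ 2) ^+ absz i.
Proof.
move=> t0 t1.
have ct : 0 <= c0 * t ^+ 2 by rewrite mulr_ge0 ?c0_ge0 ?exprn_ge0 ?ltW.
have eK : rho + 2 * (c0 * t ^+ 2) * (rho / (rho - rho^-1) + 1) = rho + K0 * t ^+ 2.
  by rewrite /K0 /dd; ring.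
have X0 : 0 <= (rho + K0 * t ^+ 2).
  have r0 : 0 <= rho by apply: ltW; apply: lt_trans rho_gt1.
  by apply: addr_ge0 => //; apply: mulr_ge0; [exact: K0_ge0 | apply: exprn_ge0; exact: ltW].
have d0 := dd_gt0.
case: i => n.
- have hyp : forall j : nat, wn t (gsub (gadd (lam (b j.+2)) (lam (b j)))
        (gscale (rho + rho^-1) (lam (b j.+1)))) <= c0 * t ^+ 2 * wn t (lam (b j.+1)) + c0 * t ^+ 2.
    move=> j; rewrite rho_sum.
    have := Ebound (t := t) (j.+1) (ltW t0) t1.
    have -> : (j.+1%:Z + 1) = j.+2 by lia.
    by have -> : (j.+1%:Z - 1) = j by lia.
  have H := @growth R N t (fun n : nat => lam (b n)) rho (c0 * t ^+ 2) (ltW t0) rho_gt1 ct hyp.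
  have := H n; rewrite eK /= -/dd => H'; apply: (le_trans H').
  rewrite [Cb * _]mulrC -mulrA; apply: ler_wpM2l; first by rewrite exprn_ge0.
  rewrite /Cb; apply: ler_wpM2r; first by rewrite invr_ge0 ltW.
  have := wn_le1 Pp (ltW t0) t1; have := wn_le1 Qp (ltW t0) t1.
  have := wn_ge0 Pm ler01; have := wn_ge0 Qm ler01.
  rewrite /Pp /Qp; lra.
- have hyp : forall j : nat, wn t (gsub (gadd (lam (b (- j.+2%:Z))) (lam (b (- j%:Z))))
        (gscale (rho + rho^-1) (lam (b (- j.+1%:Z))))) <= c0 * t ^+ 2 * wn t (lam (b (- j.+1%:Z))) + c0 * t ^+ 2.
    move=> j; rewrite rho_sum gaddC'.
    have := Ebound (t := t) (- j.+1%:Z) (ltW t0) t1.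
    have -> : (- j.+1%:Z + 1) = - j%:Z by lia.
    by have -> : (- j.+1%:Z - 1) = - j.+2%:Z by lia.
  have H := @growth R N t (fun n : nat => lam (b (- n%:Z))) rho (c0 * t ^+ 2) (ltW t0) rho_gt1 ct hyp.
  have := H n.+1; rewrite eK /= -/dd NegzE => H'; apply: (le_trans H').
  rewrite [Cb * _]mulrC -mulrA; apply: ler_wpM2l; first by rewrite exprn_ge0.
  rewrite /Cb; apply: ler_wpM2r; first by rewrite invr_ge0 ltW.
  have := wn_le1 Pm (ltW t0) t1; have := wn_le1 Qm (ltW t0) t1.
  have := wn_ge0 Pp ler01; have := wn_ge0 Qp ler01.
  rewrite /Pm /Qm oppr0; lra.
Qed.

Lemma cbnd t i : 0 < t -> t <= 1 ->
  wn t (lam (c i)) <= (wn 1 (ginv A) * (Cb * Cb) * (2 + F 1 0)) * (rho + K0 * t ^+ 2) ^+ (2 * absz i + 2).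
Proof.
move=> t0 t1; set X := rho + K0 * t ^+ 2.
have t20 : 0 <= t ^+ 2 by rewrite exprn_ge0 // ltW.
have X1 : 1 <= X.
  have := rho_gt1; have := mulr_ge0 K0_ge0 t20; rewrite /X; lra.
have X0 : 0 <= X by apply: le_trans X1.
set B := lam (b i); set C := lam (b (i + 1)); set Wa := W (b i) (b (i + 1)) a.
have fl := flipE (tri_231 (hb i)) (hc i).1 (hc i).2.
have ec : lam (c i) = gmul (ginv A) (gadd (gadd (gmul B B) (gmul C C)) (gmul (gmul B C) Wa)).
  by rewrite -fl gmulA ginv_mul ?gmul1l // lam_nz // prim_a.
set Y := Cb * X ^+ (absz i).+1.
have Cb0 := Cb_ge0.
have hB : wn t B <= Y.
  apply: le_trans; first exact: bnd.
  by apply: ler_wpM2l => //; apply: ler_weXn2l.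
have hC : wn t C <= Y.
  apply: le_trans; first exact: bnd.
  apply: ler_wpM2l => //; apply: ler_weXn2l => //; lia.
have [_ _ wWa] := Wfacts (i := i) (X := Wa) (or_introl erefl).
set F1 := F 1 0.
have hW : wn t Wa <= F1 by rewrite /F1 -(wWa 1); apply: wn_le1 => //; apply: ltW.
have GA : wn t (ginv A) <= wn 1 (ginv A) by apply: wn_le1 => //; apply: ltW.
have wB0 : 0 <= wn t B by apply: wn_ge0; apply: ltW.
have wC0 : 0 <= wn t C by apply: wn_ge0; apply: ltW.
have wW0 : 0 <= wn t Wa by apply: wn_ge0; apply: ltW.
have Y0 : 0 <= Y by apply: le_trans hB.
have F10 : 0 <= F1 by apply: le_trans hW.
have s1 : wn t (gmul B B) <= Y * Y.
  apply: le_trans; first by apply: wn_mul; apply: ltW.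
  exact: ler_pM.
have s2 : wn t (gmul C C) <= Y * Y.
  apply: le_trans; first by apply: wn_mul; apply: ltW.
  exact: ler_pM.
have s3 : wn t (gmul (gmul B C) Wa) <= Y * Y * F1.
  apply: le_trans; first by apply: wn_mul; apply: ltW.
  apply: ler_pM => //; first by apply: wn_ge0; apply: ltW.
  apply: le_trans; first by apply: wn_mul; apply: ltW.
  exact: ler_pM.
have sS : wn t (gadd (gadd (gmul B B) (gmul C C)) (gmul (gmul B C) Wa)) <= Y * Y * (2 + F1).
  have e : Y * Y * (2 + F1) = Y * Y + Y * Y + Y * Y * F1 by ring.
  rewrite e; apply: le_trans; first by apply: wn_add; apply: ltW.
  apply: lerD => //; apply: le_trans; first by apply: wn_add; apply: ltW.
  exact: lerD.
rewrite ec; apply: le_trans; first by apply: wn_mul; apply: ltW.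
have wS0 : 0 <= wn t (gadd (gadd (gmul B B) (gmul C C)) (gmul (gmul B C) Wa)).
  by apply: wn_ge0; apply: ltW.
have wG0 : 0 <= wn t (ginv A) by apply: wn_ge0; apply: ltW.
apply: le_trans; first exact: (ler_pM wG0 wS0 GA sS).
have eX : X ^+ (2 * absz i + 2) = X ^+ (absz i).+1 * X ^+ (absz i).+1.
  by rewrite -exprD nat_eq2.
rewrite eX /Y le_eqVlt; apply/orP; left; apply/eqP; ring.
Qed.

Lemma main_sec : let x := gsub (gmul (lam a) h) (W (b 0) (b 1) a) in
  let r := gscale 2^-1 (gadd x (gsqrt (gsub (gmul x x) (gcst N 4)))) in
  let Rb := body r in
  forall k : nat,
    (exists C : R, exists M : nat, forall i : int, (M <= absz i)%N ->
       grnorm (spart k (lam (b i))) <= C * (absz i)%:R ^+ k * Rb ^+ absz i)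
 /\ (exists C : R, exists M : nat, forall i : int, (M <= absz i)%N ->
       grnorm (spart k (lam (c i))) <= C * (absz i)%:R ^+ (2 * k) * Rb ^+ (2 * absz i)).
Proof.
move=> x r Rb k.
have [_ d1 _] := Wfacts (i := 0) (or_introl erefl); rewrite add0r in d1.
have eRb : Rb = rho.
  rewrite /Rb /r body_scale body_add body_gsqrt body_sub body_cst body_mul /x body_sub.
  by rewrite (body_deg2 d1) subr0 -/x0.
rewrite eRb.
have r1 : 1 <= rho by apply: ltW; exact: rho_gt1.
have Cb0 := Cb_ge0; have K00 := K0_ge0.
set X := fun t : R => rho + K0 * t ^+ 2.
have hbp : forall (n : nat) (t : R), (0 < n)%N -> 0 < t -> t <= 1 ->
    wn t (lam (b n)) <= Cb * (rho + K0 * t ^+ 2) ^+ (1 * n + 0).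
  by move=> n t _ t0 t1; rewrite mul1n addn0; exact: (bnd n t0 t1).
have hbm : forall (n : nat) (t : R), (0 < n)%N -> 0 < t -> t <= 1 ->
    wn t (lam (b (- n%:Z))) <= Cb * (rho + K0 * t ^+ 2) ^+ (1 * n + 0).
  by move=> n t _ t0 t1; rewrite mul1n addn0; have := bnd (- n%:Z) t0 t1; rewrite abszN.
set C0c := wn 1 (ginv A) * (Cb * Cb) * (2 + F 1 0).
have C0c0 : 0 <= C0c.
  rewrite /C0c; apply: mulr_ge0; first by apply: mulr_ge0; [exact: wn_ge0 | exact: mulr_ge0].
  by apply: addr_ge0 => //; exact: wn_ge0.
have hcp : forall (n : nat) (t : R), (0 < n)%N -> 0 < t -> t <= 1 ->
    wn t (lam (c n)) <= C0c * (rho + K0 * t ^+ 2) ^+ (2 * n + 2).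
  by move=> n t _ t0 t1; exact: (cbnd n t0 t1).
have hcm : forall (n : nat) (t : R), (0 < n)%N -> 0 < t -> t <= 1 ->
    wn t (lam (c (- n%:Z))) <= C0c * (rho + K0 * t ^+ 2) ^+ (2 * n + 2).
  by move=> n t _ t0 t1; have := cbnd (- n%:Z) t0 t1; rewrite abszN.
have rp : 0 <= rho by apply: le_trans r1.
split.
- have [Cp [Cp0 hp]] := extract k r1 K00 Cb0 hbp.
  have [Cm [Cm0 hm]] := extract k r1 K00 Cb0 hbm.
  exists (Cp + Cm), 1%N; case=> n hn.
  + have := hp n hn; rewrite mul1n => H; apply: (le_trans H).
    apply: ler_wpM2r; first by rewrite exprn_ge0.
    apply: ler_wpM2r; first by rewrite exprn_ge0.
    by rewrite lerDl.
  + have := hm n.+1 isT; rewrite mul1n -NegzE => H; apply: (le_trans H).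
    apply: ler_wpM2r; first by rewrite exprn_ge0.
    apply: ler_wpM2r; first by rewrite exprn_ge0.
    by rewrite lerDr.
- have [Cp [Cp0 hp]] := extract k r1 K00 C0c0 hcp.
  have [Cm [Cm0 hm]] := extract k r1 K00 C0c0 hcm.
  have mono : forall (n : nat) (C' : R), (0 < n)%N -> 0 <= C' -> C' <= Cp + Cm ->
      C' * n%:R ^+ k * rho ^+ (2 * n) <= (Cp + Cm) * n%:R ^+ (2 * k) * rho ^+ (2 * n).
    move=> n C' n0 C'0 hC; apply: ler_wpM2r; first by rewrite exprn_ge0.
    apply: ler_pM => //; first by rewrite exprn_ge0.
    apply: ler_weXn2l; first by rewrite ler1n.
    by rewrite leq_pmull.
  exists (Cp + Cm), 1%N; case=> n hn.
  + apply: le_trans; first exact: (hp n hn).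
    by apply: mono => //; rewrite lerDl.
  + have := hm n.+1 isT; rewrite -NegzE => H; apply: (le_trans H).
    by apply: mono => //; rewrite lerDr.
Qed.

End Main.


Unset Implicit Arguments.

Theorem lemma5p4 (R : realType) (N : nat)
  (lam : vec -> grass R N) (W : vec -> vec -> vec -> grass R N)
  (h : grass R N) (a : vec) (b c : int -> vec) :
  super_point lam W ->
  (* h is the super semi-perimeter (same value for every triangulation) *)
  (forall u v w, tri u v w -> hT lam W u v w = h) ->
  prim a ->
  (* {b_i} : the arcs disjoint from a, with {a, b_i, b_{i+1}} triangulations *)
  (forall i, tri a (b i) (b (i + 1))) ->
  (forall v, prim v -> `|det a v| = 1 -> exists i, same_arc v (b i)) ->
  (forall i j, same_arc (b i) (b j) -> i = j) ->
  (* c_i : the flip of a in {a, b_i, b_{i+1}} *)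
  (forall i, tri (b i) (b (i + 1)) (c i) /\ ~~ same_arc (c i) a) ->
  let x := gsub (gmul (lam a) h) (W (b 0) (b 1) a) in
  let r := gscale 2^-1 (gadd x (gsqrt (gsub (gmul x x) (gcst N 4)))) in
  let Rb := body r in
  forall k : nat,
    (exists C : R, exists M : nat, forall i : int, (M <= absz i)%N ->
       grnorm (spart k (lam (b i))) <= C * (absz i)%:R ^+ k * Rb ^+ absz i)
 /\ (exists C : R, exists M : nat, forall i : int, (M <= absz i)%N ->
       grnorm (spart k (lam (c i))) <= C * (absz i)%:R ^+ (2 * k) * Rb ^+ (2 * absz i)).
Proof.
move=> sp hh pa hb hcov hinj hc.
exact: (main_sec sp hh hb hinj hc).
Qed.
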